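(* Fix one of the two variants $\sharp\in\{\text{lumped},\text{exact}\}$ described in the context, let $\vec X^m\in\underline V^h_{\partial_0}$ satisfy assumption $(\mathfrak A)$, and let $\Delta t_m>0$. (i) If $(\delta\vec X^{m+1},\kappa^{m+1})\in\underline V^h_\partial\times W_\sharp$ satisfies, with $\vec X^{m+1}=\vec X^m+\delta\vec X^{m+1}$, $$\Big(\vec X^m\cdot\vec e_1\,\tfrac{\vec X^{m+1}-\vec X^m}{\Delta t_m},\chi\,\vec\nu^m|\vec X^m_\rho|\Big)_\sharp=\Big(\vec X^m\cdot\vec e_1\,\kappa^{m+1},\chi|\vec X^m_\rho|\Big)_\sharp\quad\forall\chi\in W_\sharp,$$ $$\Big(\vec X^m\cdot\vec e_1\,\kappa^{m+1}\vec\nu^m,\vec\eta\,|\vec X^m_\rho|\Big)_\sharp+\big(\vec\eta\cdot\vec e_1,|\vec X^{m+1}_\rho|\big)+\Big((\vec X^m\cdot\vec e_1)\vec X^{m+1}_\rho,\vec\eta_\rho|\vec X^m_\rho|^{-1}\Big)=B^m(\vec\eta)\quad\forall\vec\eta\in\underline V^h_\partial,$$ then $E(\vec X^{m+1})+2\pi\Delta t_m\big(\vec X^m\cdot\vec e_1\,|\kappa^{m+1}|^2,|\vec X^m_\rho|\big)_\sharp\le E(\vec X^m)$. (ii) If $(\delta\vec X^{m+1},\vec\kappa^{m+1})\in\underline V^h_\partial\times[W_\sharp]^2$ satisfies, with $\vec X^{m+1}=\vec X^m+\delta\vec X^{m+1}$, $$\Big(\vec X^m\cdot\vec e_1\,\tfrac{\vec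 X^{m+1}-\vec X^m}{\Delta t_m},\vec\chi\,|\vec X^m_\rho|\Big)_\sharp=\Big((\vec X^m\cdot\vec e_1)\vec\kappa^{m+1},\vec\chi|\vec X^m_\rho|\Big)_\sharp\quad\forall\vec\chi\in[W_\sharp]^2,$$ $$\Big((\vec X^m\cdot\vec e_1)\vec\kappa^{m+1},\vec\eta\,|\vec X^m_\rho|\Big)_\sharp+\big(\vec\eta\cdot\vec e_1,|\vec X^{m+1}_\rho|\big)+\Big((\vec X^m\cdot\vec e_1)\vec X^{m+1}_\rho,\vec\eta_\rho|\vec X^m_\rho|^{-1}\Big)=B^m(\vec\eta)\quad\forall\vec\eta\in\underline V^h_\partial,$$ then $E(\vec X^{m+1})+2\pi\Delta t_m\big(\vec X^m\cdot\vec e_1\,|\vec\kappa^{m+1}|^2,|\vec X^m_\rho|\big)_\sharp\le E(\vec X^m)$.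
   Context: Setup. $\vec e_1=(1,0)^T$, $\vec e_2=(0,1)^T$; ''$\cdot$'' is the Euclidean inner product; $[r]_+=\max\{r,0\}$, $[r]_-=-\max\{-r,0\}$. $I$ is either the periodic interval $\mathbb R/\mathbb Z$ (with $\partial I=\emptyset$) or $I=(0,1)$ (with $\partial I=\{0,1\}$). $\partial I=\partial_DI\cup\partial_0I\cup\partial_1I\cup\partial_2I$ is a given disjoint partition, and $\widehat\varrho^{(p)}\in\mathbb R$, $p\in\{0,1\}$, are given constants with $|\widehat\varrho^{(p)}|\le1$. Let $J\ge3$, $h=1/J$, $q_j=jh$ ($j=0,\dots,J$; $q_0=q_J$ identified in the periodic case). $V^h$ is the space of continuous functions on $\overline I$ (periodic if $I=\mathbb R/\mathbb Z$) that are affine on each $[q_{j-1},q_j]$; $\underline V^h=[V^h]^2$; $\underline V^h_{\partial_0}=\{\vec\eta\in\underline V^h:\vec\eta(\rho)\cdot\vec e_1=0\ \forall\rho\in\partial_0I\}$; $\underline V^h_\partial=\{\vec\eta\in\underline V^h_{\partial_0}:\vec\eta(\rho)\cdot\vec e_i=0\ \forall\rho\in\partial_iI,\ i=1,2;\ \vec\eta(\rho)=\vec0\ \forall\rho\in\partial_DI\}$; $W^h_{\partial_0}=\{\chi\in V^h:\chi(\rho)=0\ \forall\rho\in\partial_0I\}$. $(\cdot,\cdot)$ is the $L^2(I)$ inner product (with dot product for vector functions), and for piecewise continuous $f,g$ the mass-lumped product is $(f,g)^h=\tfrac h2\sum_{j=1}^J[(fg)(q_j^-)+(fg)(q_{j-1}^+)]$.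 Two variants: in the ''lumped'' variant $(\cdot,\cdot)_\sharp=(\cdot,\cdot)^h$ and $W_\sharp=W^h_{\partial_0}$; in the ''exact'' variant $(\cdot,\cdot)_\sharp=(\cdot,\cdot)$ and $W_\sharp=V^h$. For $\vec X^m$ with $|\vec X^m_\rho|>0$ a.e., $\vec\nu^m=-[\vec X^m_\rho]^\perp/|\vec X^m_\rho|$ with $(a,b)^\perp=(b,-a)$. Assumption $(\mathfrak A)$: $|\vec X^m_\rho|>0$ a.e. on $I$ and $\vec X^m(\rho)\cdot\vec e_1>0$ for all $\rho\in\overline I\setminus\partial_0I$. The boundary functional is $B^m(\vec\eta)=-\sum_{p\in\partial_1I}\widehat\varrho^{(p)}(\vec X^m(p)\cdot\vec e_1)\vec\eta(p)\cdot\vec e_2-\sum_{p\in\partial_2I}\big(([\widehat\varrho^{(p)}]_+\vec X^{m+1}(p)+[\widehat\varrho^{(p)}]_-\vec X^m(p))\cdot\vec e_1\big)\vec\eta(p)\cdot\vec e_1$. The discrete energy of $\vec X\in\underline V^h$ is $E(\vec X)=2\pi(\vec X\cdot\vec e_1,|\vec X_\rho|)+2\pi\sum_{p\in\partial_1I}\widehat\varrho^{(p)}(\vec X(p)\cdot\vec e_1)(\vec X(p)\cdot\vec e_2)+\pi\sum_{p\in\partial_2I}\widehat\varrho^{(p)}(\vec X(p)\cdot\vec e_1)^2$. *)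

(* Defs.v *)
From Stdlib Require Import Reals Lra List ClassicalEpsilon.
Import ListNotations.
Open Scope R_scope.

(** Vectors in R^2; e1-component = fst, e2-component = snd. *)
Definition Vec := (R * R)%type.
Definition vdot (u w : Vec) : R := fst u * fst w + snd u * snd w.
Definition vnorm (u : Vec) : R := sqrt (vdot u u).
Definition vadd (u w : Vec) : Vec := (fst u + fst w, snd u + snd w).
Definition vsub (u w : Vec) : Vec := (fst u - fst w, snd u - snd w).
Definition vscal (a : R) (u : Vec) : Vec := (a * fst u, a * snd u).
Definition vperp (u : Vec) : Vec := (snd u, - fst u).

Definition posp (r : R) : R := Rmax r 0.
Definition negp (r : R) : R := - Rmax (- r) 0.

Definition hh (J : nat) : R := 1 / INR J.
Definition qn (J j : nat) : R := INR j * hh J.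

(** A function of V^h is represented by its nodal values c 0, ..., c J
    (values at indices > J are irrelevant).  In the periodic case
    (per = true) the nodes q_0 and q_J are identified: c J = c 0. *)
Definition inVh (per : bool) (J : nat) (c : nat -> R) : Prop :=
  per = true -> c J = c O.

(** Restriction to the element [q_{j-1}, q_j] (1 <= j <= J) of the
    piecewise affine function with nodal values c. *)
Definition ev (J : nat) (c : nat -> R) (j : nat) (rho : R) : R :=
  c (j - 1)%nat + (c j - c (j - 1)%nat) * (rho - qn J (j - 1)) / hh J.
Definition der (J : nat) (c : nat -> R) (j : nat) : R :=
  (c j - c (j - 1)%nat) / hh J.

Definition comp1 (X : nat -> Vec) : nat -> R := fun k => fst (X k).
Definition comp2 (X : nat -> Vec) : nat -> R := fun k => snd (X k).
Definition evV (J : nat) (X : nat -> Vec) (j : nat) (rho : R) : Vec :=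
  (ev J (comp1 X) j rho, ev J (comp2 X) j rho).
Definition derV (J : nat) (X : nat -> Vec) (j : nat) : Vec :=
  (der J (comp1 X) j, der J (comp2 X) j).
Definition inVhV (per : bool) (J : nat) (X : nat -> Vec) : Prop :=
  inVh per J (comp1 X) /\ inVh per J (comp2 X).

Definition nuV (J : nat) (X : nat -> Vec) (j : nat) : Vec :=
  vscal (- / vnorm (derV J X j)) (vperp (derV J X j)).

(** Boundary: endpoints indexed by bool (false = 0, true = 1). *)
Inductive BC := BD | B0 | B1 | B2.
Definition BC_eqb (a b : BC) : bool :=
  match a, b with
  | BD, BD | B0, B0 | B1, B1 | B2, B2 => true
  | _, _ => false
  end.
Definition node (J : nat) (p : bool) : nat := if p then J else O.
Definition ptR (p : bool) : R := if p then 1 else 0.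
(** p belongs to d_k I (the boundary is empty in the periodic case) *)
Definition inBd (per : bool) (bc : bool -> BC) (k : BC) (p : bool) : bool :=
  negb per && BC_eqb (bc p) k.
Definition bsum (f : bool -> R) : R := f false + f true.
Definition bsumIn (per : bool) (bc : bool -> BC) (k : BC) (f : bool -> R) : R :=
  bsum (fun p => if inBd per bc k p then f p else 0).

Definition inV0 per bc J (X : nat -> Vec) : Prop :=
  inVhV per J X /\
  forall p, inBd per bc B0 p = true -> fst (X (node J p)) = 0.
Definition inVpart per bc J (X : nat -> Vec) : Prop :=
  inV0 per bc J X /\
  (forall p, inBd per bc B1 p = true -> fst (X (node J p)) = 0) /\
  (forall p, inBd per bc B2 p = true -> snd (X (node J p)) = 0) /\
  (forall p, inBd per bc BD p = true -> X (node J p) = (0, 0)).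
Definition inW0 per bc J (c : nat -> R) : Prop :=
  inVh per J c /\ forall p, inBd per bc B0 p = true -> c (node J p) = 0.

Inductive variant := Lumped | Exact.
Definition inWs (v : variant) per bc J (c : nat -> R) : Prop :=
  match v with
  | Lumped => inW0 per bc J c
  | Exact => inVh per J c
  end.

(** The exact Riemann integral of f over [a,b] (chosen
    classically; it is the Riemann integral whenever f is integrable,
    which is the case for all the polynomial integrands used below). *)
Definition Rint (f : R -> R) (a b : R) : R :=
  epsilon (inhabits 0)
    (fun v => exists pr : Riemann_integrable f a b, RiemannInt pr = v).

Definition sumj (J : nat) (f : nat -> R) : R :=
  fold_right Rplus 0 (map f (seq 1 J)).

(** A piecewise continuous integrand (e.g. the pointwise product f g) is
    given elementwise: F j is its restriction to [q_{j-1}, q_j].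
    ip_exact J F = (f, g) = int_I f g ;
    ip_lumped J F = (f, g)^h = h/2 sum_j [(fg)(q_j^-) + (fg)(q_{j-1}^+)]. *)
Definition ip_exact (J : nat) (F : nat -> R -> R) : R :=
  sumj J (fun j => Rint (F j) (qn J (j - 1)) (qn J j)).
Definition ip_lumped (J : nat) (F : nat -> R -> R) : R :=
  hh J / 2 * sumj J (fun j => F j (qn J j) + F j (qn J (j - 1))).
Definition ip_sharp (v : variant) J F : R :=
  match v with Lumped => ip_lumped J F | Exact => ip_exact J F end.

Definition isB0pt (per : bool) (bc : bool -> BC) (rho : R) : Prop :=
  exists p, inBd per bc B0 p = true /\ rho = ptR p.
Definition assumptionA per bc J (X : nat -> Vec) : Prop :=
  (forall j, (1 <= j <= J)%nat -> vnorm (derV J X j) > 0) /\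
  (forall j rho, (1 <= j <= J)%nat -> qn J (j - 1) <= rho <= qn J j ->
     ~ isB0pt per bc rho -> fst (evV J X j rho) > 0).

Definition Bm per bc (rhat : bool -> R) J (Xm Xnew eta : nat -> Vec) : R :=
  - bsumIn per bc B1 (fun p =>
        rhat p * fst (Xm (node J p)) * snd (eta (node J p)))
  - bsumIn per bc B2 (fun p =>
        (posp (rhat p) * fst (Xnew (node J p))
         + negp (rhat p) * fst (Xm (node J p))) * fst (eta (node J p))).

Definition energy per bc (rhat : bool -> R) J (X : nat -> Vec) : R :=
  2 * PI * ip_exact J (fun j rho => fst (evV J X j rho) * vnorm (derV J X j))
  + 2 * PI * bsumIn per bc B1 (fun p =>
        rhat p * fst (X (node J p)) * snd (X (node J p)))
  + PI * bsumIn per bc B2 (fun p => rhat p * (fst (X (node J p))) ^ 2).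

(** The common second equation's extra terms:
    (eta.e1, |X^{m+1}_rho|) + ((X^m.e1) X^{m+1}_rho, eta_rho |X^m_rho|^{-1}) *)
Definition stiff J (Xm Xnew eta : nat -> Vec) : R :=
  ip_exact J (fun j rho => fst (evV J eta j rho) * vnorm (derV J Xnew j))
  + ip_exact J (fun j rho => fst (evV J Xm j rho) *
        vdot (derV J Xnew j) (derV J eta j) / vnorm (derV J Xm j)).

(* Main.v *)
Require Import Defs.
From Stdlib Require Import Reals Lra Lia List ClassicalEpsilon FunctionalExtensionality.
Open Scope R_scope.

Ltac ct := match goal with
 | |- continuity_pt (fun _ => ?c) _ => apply continuity_pt_const; intros ? ?; reflexivity
 | |- continuity_pt (fun x => x) ?y => apply (derivable_continuous_pt _ _ (derivable_pt_id y))
 | |- continuity_pt (fun x => @?f x + @?g x) _ => apply (continuity_pt_plus f g); ct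
 | |- continuity_pt (fun x => @?f x - @?g x) _ => apply (continuity_pt_minus f g); ct
 | |- continuity_pt (fun x => @?f x * @?g x) _ => apply (continuity_pt_mult f g); ct
 | |- continuity_pt (fun x => - @?f x) _ => apply (continuity_pt_opp f); ct
 end.

Definition CT (f : R -> R) := forall x, continuity_pt f x.

Ltac ctac := let j := fresh "j" in let x := fresh "x" in intros j x;
  unfold evV, vdot, vscal, vsub, vadd, nuV, vperp, ev, Rdiv; cbn [fst snd pow]; ct.

Lemma Rint_RI f a b (pr : Riemann_integrable f a b) : Rint f a b = RiemannInt pr.
Proof.
  unfold Rint.
  destruct (epsilon_spec (inhabits 0) (fun v => exists pr, RiemannInt pr = v)
              (ex_intro _ _ (ex_intro _ pr eq_refl))) as [pr' H].
  rewrite <- H. apply RiemannInt_P5.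
Qed.

Lemma CT_int f a b : a <= b -> CT f -> Riemann_integrable f a b.
Proof. intros; apply continuity_implies_RiemannInt; auto. Qed.

Lemma Rint_lin f g a b l : a <= b -> CT f -> CT g ->
  Rint (fun x => f x + l * g x) a b = Rint f a b + l * Rint g a b.
Proof.
  intros Hab Hf Hg.
  pose proof (CT_int f a b Hab Hf) as p1. pose proof (CT_int g a b Hab Hg) as p2.
  rewrite (Rint_RI _ _ _ (RiemannInt_P10 l p1 p2)), (Rint_RI _ _ _ p1), (Rint_RI _ _ _ p2).
  apply RiemannInt_P13.
Qed.

Lemma Rint_mono f g a b : a <= b -> CT f -> CT g ->
  (forall x, a < x < b -> f x <= g x) -> Rint f a b <= Rint g a b.
Proof.
  intros Hab Hf Hg H.
  pose proof (CT_int f a b Hab Hf) as p1. pose proof (CT_int g a b Hab Hg) as p2.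
  rewrite (Rint_RI _ _ _ p1), (Rint_RI _ _ _ p2). apply RiemannInt_P19; auto.
Qed.

Lemma CT_const c : CT (fun _ => c).
Proof. intro; apply continuity_pt_const; intros ? ?; reflexivity. Qed.

Lemma Rint_scal f a b c : a <= b -> CT f ->
  Rint (fun x => c * f x) a b = c * Rint f a b.
Proof.
  intros Hab Hf.
  replace (fun x => c * f x) with (fun x => (fun _ => 0) x + c * f x)
    by (apply functional_extensionality; intros; ring).
  rewrite Rint_lin; auto using CT_const.
  pose proof (RiemannInt_P14 a b 0) as p.
  change (fun _ : R => 0) with (fct_cte 0).
  rewrite (Rint_RI _ _ _ p), RiemannInt_P15. ring.
Qed.

Definition sumL (l : list nat) (f : nat -> R) := fold_right Rplus 0 (map f l).

Lemma sumL_le l f g : (forall j, In j l -> f j <= g j) -> sumL l f <= sumL l g.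
Proof.
  induction l; simpl; intros H; unfold sumL; simpl. lra.
  apply Rplus_le_compat. apply H; auto. apply IHl; auto.
Qed.

Lemma sumL_ext l f g : (forall j, In j l -> f j = g j) -> sumL l f = sumL l g.
Proof.
  induction l; simpl; intros H; unfold sumL; simpl. lra.
  rewrite H by auto. f_equal. apply IHl; auto.
Qed.

Lemma sumL_lin l f g c : sumL l (fun j => f j + c * g j) = sumL l f + c * sumL l g.
Proof. induction l; unfold sumL in *; simpl. ring. rewrite IHl. ring. Qed.

Lemma sumj_sumL J f : sumj J f = sumL (seq 1 J) f.
Proof. reflexivity. Qed.

Lemma hh_pos J : (0 < J)%nat -> 0 < hh J.
Proof. intros; unfold hh. apply Rdiv_lt_0_compat. lra. apply lt_0_INR; auto. Qed.

Lemma qn_le J j : (0 < J)%nat -> qn J (j - 1) <= qn J j.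
Proof.
  intros H; unfold qn. apply Rmult_le_compat_r. left; apply hh_pos; auto.
  apply le_INR; lia.
Qed.

Lemma qn_ge0 J j : (0 < J)%nat -> 0 <= qn J j.
Proof. intros H; unfold qn. apply Rmult_le_pos. apply pos_INR. left; apply hh_pos; auto. Qed.

Lemma qn_le1 J j : (0 < J)%nat -> (j <= J)%nat -> qn J j <= 1.
Proof.
  intros H Hj; unfold qn, hh.
  assert (0 < INR J) by (apply lt_0_INR; auto).
  assert (INR j <= INR J) by (apply le_INR; auto).
  apply (Rmult_le_reg_r (INR J)); auto. field_simplify; lra.
Qed.

Lemma ipE_lin J F G l : (0 < J)%nat -> (forall j, CT (F j)) -> (forall j, CT (G j)) ->
  ip_exact J (fun j rho => F j rho + l * G j rho) = ip_exact J F + l * ip_exact J G.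
Proof.
  intros HJ HF HG. unfold ip_exact. rewrite !sumj_sumL.
  rewrite <- sumL_lin. apply sumL_ext. intros j _. apply Rint_lin; auto using qn_le.
Qed.

Lemma ipE_mono J F G : (0 < J)%nat -> (forall j, CT (F j)) -> (forall j, CT (G j)) ->
  (forall j rho, (1 <= j <= J)%nat -> qn J (j - 1) < rho < qn J j -> F j rho <= G j rho) ->
  ip_exact J F <= ip_exact J G.
Proof.
  intros HJ HF HG H. unfold ip_exact. rewrite !sumj_sumL.
  apply sumL_le. intros j Hj. apply in_seq in Hj.
  apply Rint_mono; auto using qn_le. intros; apply H; auto; lia.
Qed.

Lemma ipS_scal v J F c : (0 < J)%nat -> (forall j, CT (F j)) ->
  ip_sharp v J (fun j rho => c * F j rho) = c * ip_sharp v J F.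
Proof.
  intros HJ HF. destruct v; simpl.
  - unfold ip_lumped. rewrite !sumj_sumL.
    replace (sumL (seq 1 J) (fun j => c * F j (qn J j) + c * F j (qn J (j - 1))))
      with (sumL (seq 1 J) (fun _ => 0) + c * sumL (seq 1 J) (fun j => F j (qn J j) + F j (qn J (j - 1)))).
    2:{ rewrite <- sumL_lin. apply sumL_ext. intros; ring. }
    replace (sumL (seq 1 J) (fun _ => 0)) with 0. ring.
    clear. induction (seq 1 J); unfold sumL in *; simpl; lra.
  - unfold ip_exact. rewrite !sumj_sumL.
    replace (sumL (seq 1 J) (fun j => Rint (fun rho => c * F j rho) (qn J (j - 1)) (qn J j)))
      with (sumL (seq 1 J) (fun _ => 0) + c * sumL (seq 1 J) (fun j => Rint (F j) (qn J (j - 1)) (qn J j))).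
    2:{ rewrite <- sumL_lin. apply sumL_ext. intros. rewrite Rint_scal; auto using qn_le. ring. }
    replace (sumL (seq 1 J) (fun _ => 0)) with 0. ring.
    clear. induction (seq 1 J); unfold sumL in *; simpl; lra.
Qed.

Lemma key x a b : 0 <= x -> vnorm b > 0 ->
  x * (vnorm a - vnorm b) <= x * vdot a (vsub a b) / vnorm b.
Proof.
  intros Hx Hb. destruct a as [a1 a2], b as [b1 b2].
  unfold vnorm, vdot, vsub in *; simpl in *.
  set (na := sqrt (a1 * a1 + a2 * a2)) in *.
  set (nb := sqrt (b1 * b1 + b2 * b2)) in *.
  assert (Ha2 : na * na = a1 * a1 + a2 * a2) by (apply sqrt_sqrt; nra).
  assert (Hb2 : nb * nb = b1 * b1 + b2 * b2) by (apply sqrt_sqrt; nra).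
  assert (Hna : 0 <= na) by apply sqrt_pos.
  assert (CS : a1 * b1 + a2 * b2 <= na * nb).
  { assert (E : na * nb = sqrt ((a1 * a1 + a2 * a2) * (b1 * b1 + b2 * b2)))
      by (unfold na, nb; rewrite sqrt_mult; [reflexivity|apply Rplus_le_le_0_compat; apply Rle_0_sqr|apply Rplus_le_le_0_compat; apply Rle_0_sqr]).
    rewrite E. apply Rle_trans with (Rabs (a1 * b1 + a2 * b2)). apply Rle_abs.
    rewrite <- sqrt_Rsqr_abs. apply sqrt_le_1_alt. pose proof (Rle_0_sqr (a1 * b2 - a2 * b1)). unfold Rsqr in *. nra. }
  assert (M : na - nb <= (a1 * (a1 - b1) + a2 * (a2 - b2)) / nb).
  { apply (Rmult_le_reg_r nb); auto. unfold Rdiv. rewrite Rmult_assoc, Rinv_l by lra. pose proof (Rle_0_sqr (na - nb)). unfold Rsqr in *. nra. }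
  unfold Rdiv in *. rewrite Rmult_assoc. apply Rmult_le_compat_l; auto.
Qed.

Lemma Xm1_pos per bc J Xm : (0 < J)%nat -> assumptionA per bc J Xm ->
  forall j rho, (1 <= j <= J)%nat -> qn J (j - 1) < rho < qn J j -> fst (evV J Xm j rho) > 0.
Proof.
  intros HJ [_ HA] j rho Hj Hr. apply HA; auto. lra.
  intros [p [_ Hp]].
  pose proof (qn_ge0 J (j - 1) HJ). pose proof (qn_le1 J j HJ ltac:(lia)).
  destruct p; simpl in Hp; lra.
Qed.

Lemma posp_negp r : r = posp r + negp r /\ 0 <= posp r /\ negp r <= 0.
Proof. unfold posp, negp, Rmax. destruct (Rle_dec r 0), (Rle_dec (- r) 0); lra. Qed.

Lemma b2_ineq r a b : r * (a ^ 2 - b ^ 2) - 2 * ((posp r * a + negp r * b) * (a - b)) <= 0.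
Proof.
  destruct (posp_negp r) as [E [P N]]. rewrite E at 1.
  assert (0 <= posp r * ((a - b) * (a - b))) by (apply Rmult_le_pos; [exact P | apply Rle_0_sqr]).
  assert (negp r * ((a - b) * (a - b)) <= 0).
  { pose proof (Rle_0_sqr (a - b)); unfold Rsqr in *; nra. }
  match goal with |- ?L <= 0 => replace L with (- (posp r * ((a - b) * (a - b))) + negp r * ((a - b) * (a - b))) by ring end.
  lra.
Qed.

Lemma stiff_ge J Xm dX per bc : (0 < J)%nat -> assumptionA per bc J Xm ->
  let Xnew := fun k => vadd (Xm k) (dX k) in
  ip_exact J (fun j rho => fst (evV J Xnew j rho) * vnorm (derV J Xnew j))
  - ip_exact J (fun j rho => fst (evV J Xm j rho) * vnorm (derV J Xm j))
  <= stiff J Xm Xnew dX.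
Proof.
  intros HJ HA Xnew. unfold stiff.
  set (H := fun j rho => fst (evV J Xnew j rho) * vnorm (derV J Xnew j)).
  set (K := fun j rho => fst (evV J Xm j rho) * vnorm (derV J Xm j)).
  set (F := fun j rho => fst (evV J dX j rho) * vnorm (derV J Xnew j)).
  set (G := fun j rho => fst (evV J Xm j rho) *
        vdot (derV J Xnew j) (derV J dX j) / vnorm (derV J Xm j)).
  assert (L1 : ip_exact J (fun j rho => H j rho + (-1) * K j rho) = ip_exact J H + (-1) * ip_exact J K)
    by (apply ipE_lin; auto; unfold H, K; ctac).
  assert (L2 : ip_exact J (fun j rho => F j rho + 1 * G j rho) = ip_exact J F + 1 * ip_exact J G)
    by (apply ipE_lin; auto; unfold F, G; ctac).
  enough (ip_exact J (fun j rho => H j rho + (-1) * K j rho) <= ip_exact J (fun j rho => F j rho + 1 * G j rho)) by lra.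
  apply ipE_mono; auto; try (unfold H, K, F, G; ctac).
  intros j rho Hj Hr.
  pose proof (Xm1_pos per bc J Xm HJ HA j rho Hj Hr) as Hx.
  destruct HA as [HA1 _]. pose proof (HA1 j Hj) as Hb.
  assert (E1 : fst (evV J Xnew j rho) = fst (evV J Xm j rho) + fst (evV J dX j rho)).
  { unfold evV, ev, Xnew, comp1, vadd; simpl. unfold Rdiv. ring. }
  assert (E2 : derV J dX j = vsub (derV J Xnew j) (derV J Xm j)).
  { unfold derV, der, Xnew, comp1, comp2, vadd, vsub; simpl. f_equal; unfold Rdiv; ring. }
  unfold H, K, F, G. rewrite E1, E2.
  pose proof (key (fst (evV J Xm j rho)) (derV J Xnew j) (derV J Xm j) ltac:(lra) Hb).
  lra.
Qed.

Lemma core per J bc rhat Xm dX Kt : (0 < J)%nat -> assumptionA per bc J Xm -> inVpart per bc J dX ->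
  let Xnew := fun k => vadd (Xm k) (dX k) in
  Kt + stiff J Xm Xnew dX = Bm per bc rhat J Xm Xnew dX ->
  energy per bc rhat J Xnew + 2 * PI * Kt <= energy per bc rhat J Xm.
Proof.
  intros HJ HA HdX Xnew Heq.
  pose proof (stiff_ge J Xm dX per bc HJ HA) as S. cbv zeta in S. subst Xnew.
  set (In := ip_exact J _) in S. set (Io := ip_exact J _) in S.
  set (St := stiff J _ _ _) in *.
  set (BB := Bm _ _ _ _ _ _ _) in Heq.
  assert (M : 2 * PI * (In - Io + Kt) <= 2 * PI * BB).
  { apply Rmult_le_compat_l. pose proof PI_RGT_0; lra. lra. }
  unfold energy. fold In. fold Io.
  enough (2 * PI * BB
     + 2 * PI * bsumIn per bc Defs.B1 (fun p => rhat p * fst (vadd (Xm (node J p)) (dX (node J p))) * snd (vadd (Xm (node J p)) (dX (node J p))))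
     + PI * bsumIn per bc Defs.B2 (fun p => rhat p * fst (vadd (Xm (node J p)) (dX (node J p))) ^ 2)
     <= 2 * PI * bsumIn per bc Defs.B1 (fun p => rhat p * fst (Xm (node J p)) * snd (Xm (node J p)))
     + PI * bsumIn per bc Defs.B2 (fun p => rhat p * fst (Xm (node J p)) ^ 2)) by lra.
  unfold BB, Bm.
  destruct HdX as [[_ H0] [H1 [H2 HD]]].
  assert (HP : 0 < PI) by apply PI_RGT_0.
  assert (B2f : forall p, PI * (rhat p * (fst (Xm (node J p)) + fst (dX (node J p))) ^ 2 - rhat p * fst (Xm (node J p)) ^ 2
      - 2 * ((posp (rhat p) * (fst (Xm (node J p)) + fst (dX (node J p))) + negp (rhat p) * fst (Xm (node J p))) * fst (dX (node J p)))) <= 0).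
  { intro p. pose proof (b2_ineq (rhat p) (fst (Xm (node J p)) + fst (dX (node J p))) (fst (Xm (node J p)))) as Hb.
    replace (fst (Xm (node J p)) + fst (dX (node J p)) - fst (Xm (node J p))) with (fst (dX (node J p))) in Hb by ring.
    rewrite <- (Rmult_0_r PI). apply Rmult_le_compat_l; lra. }
  pose proof (B2f false) as Bf. pose proof (B2f true) as Bt.
  unfold bsumIn, bsum, vadd; cbn [fst snd].
  destruct (inBd per bc Defs.B1 false) eqn:E1f; destruct (inBd per bc Defs.B1 true) eqn:E1t;
  destruct (inBd per bc Defs.B2 false) eqn:E2f; destruct (inBd per bc Defs.B2 true) eqn:E2t;
  repeat match goal with
  | E : inBd per bc Defs.B1 ?p = true |- _ => let h := fresh in pose proof (H1 p E) as h; clear E; rewrite h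
  end; lra.
Qed.

Theorem theorem4p6
  (per : bool) (J : nat) (bc : bool -> BC) (rhat : bool -> R)
  (v : variant) (Xm : nat -> Vec) (dt : R)
  (HJ : (3 <= J)%nat)
  (Hrhat : forall p : bool, Rabs (rhat p) <= 1)
  (HXm : inV0 per bc J Xm)
  (HA : assumptionA per bc J Xm)
  (Hdt : dt > 0) :
  (* (i) *)
  (forall (dX : nat -> Vec) (kappa : nat -> R),
     let Xnew := fun k => vadd (Xm k) (dX k) in
     inVpart per bc J dX ->
     inWs v per bc J kappa ->
     (forall chi : nat -> R, inWs v per bc J chi ->
        ip_sharp v J (fun j rho =>
          fst (evV J Xm j rho) *
          vdot (vscal (/ dt) (vsub (evV J Xnew j rho) (evV J Xm j rho)))
               (nuV J Xm j) *
          ev J chi j rho * vnorm (derV J Xm j))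
        = ip_sharp v J (fun j rho =>
          fst (evV J Xm j rho) * ev J kappa j rho *
          ev J chi j rho * vnorm (derV J Xm j))) ->
     (forall eta : nat -> Vec, inVpart per bc J eta ->
        ip_sharp v J (fun j rho =>
          fst (evV J Xm j rho) * ev J kappa j rho *
          vdot (nuV J Xm j) (evV J eta j rho) * vnorm (derV J Xm j))
        + stiff J Xm Xnew eta
        = Bm per bc rhat J Xm Xnew eta) ->
     energy per bc rhat J Xnew
     + 2 * PI * dt * ip_sharp v J (fun j rho =>
         fst (evV J Xm j rho) * (ev J kappa j rho) ^ 2 * vnorm (derV J Xm j))
     <= energy per bc rhat J Xm) /\
  (* (ii) *)
  (forall (dX : nat -> Vec) (kappa : nat -> Vec),
     let Xnew := fun k => vadd (Xm k) (dX k) in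
     inVpart per bc J dX ->
     inWs v per bc J (comp1 kappa) -> inWs v per bc J (comp2 kappa) ->
     (forall chi : nat -> Vec,
        inWs v per bc J (comp1 chi) -> inWs v per bc J (comp2 chi) ->
        ip_sharp v J (fun j rho =>
          fst (evV J Xm j rho) *
          vdot (vscal (/ dt) (vsub (evV J Xnew j rho) (evV J Xm j rho)))
               (evV J chi j rho) * vnorm (derV J Xm j))
        = ip_sharp v J (fun j rho =>
          fst (evV J Xm j rho) *
          vdot (evV J kappa j rho) (evV J chi j rho) * vnorm (derV J Xm j))) ->
     (forall eta : nat -> Vec, inVpart per bc J eta ->
        ip_sharp v J (fun j rho =>
          fst (evV J Xm j rho) *
          vdot (evV J kappa j rho) (evV J eta j rho) * vnorm (derV J Xm j))
        + stiff J Xm Xnew eta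
        = Bm per bc rhat J Xm Xnew eta) ->
     energy per bc rhat J Xnew
     + 2 * PI * dt * ip_sharp v J (fun j rho =>
         fst (evV J Xm j rho) *
         vdot (evV J kappa j rho) (evV J kappa j rho) * vnorm (derV J Xm j))
     <= energy per bc rhat J Xm).
Proof.
  assert (HJ0 : (0 < J)%nat) by lia.
  assert (Hdt0 : dt <> 0) by lra.
  split.
  - intros dX kappa Xnew HdX Hk Hc He. subst Xnew.
    specialize (He dX HdX). specialize (Hc kappa Hk).
    set (Aint := fun j rho => fst (evV J Xm j rho) * ev J kappa j rho *
          vdot (nuV J Xm j) (evV J dX j rho) * vnorm (derV J Xm j)) in *.
    rewrite (functional_extensionality_dep _ (fun j => fun rho => / dt * Aint j rho)) in Hc.
    2:{ intro j. apply functional_extensionality. intro rho. unfold Aint.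
        unfold evV, ev, vdot, vscal, vsub, comp1, comp2, vadd; simpl. unfold Rdiv. ring. }
    rewrite ipS_scal in Hc by (auto; unfold Aint; ctac).
    set (Kint := fun j rho => fst (evV J Xm j rho) * ev J kappa j rho ^ 2 * vnorm (derV J Xm j)).
    assert (EK : ip_sharp v J (fun j rho => fst (evV J Xm j rho) * ev J kappa j rho *
          ev J kappa j rho * vnorm (derV J Xm j)) = ip_sharp v J Kint).
    { f_equal. apply functional_extensionality; intro j; apply functional_extensionality; intro rho.
      unfold Kint; ring. }
    rewrite EK in Hc.
    assert (EA : ip_sharp v J Aint = dt * ip_sharp v J Kint).
    { rewrite <- Hc. field. auto. }
    pose proof (core per J bc rhat Xm dX (ip_sharp v J Aint) HJ0 HA HdX He) as C.
    rewrite EA in C. lra.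
  - intros dX kappa Xnew HdX Hk1 Hk2 Hc He. subst Xnew.
    specialize (He dX HdX). specialize (Hc kappa Hk1 Hk2).
    set (Aint := fun j rho => fst (evV J Xm j rho) *
          vdot (evV J kappa j rho) (evV J dX j rho) * vnorm (derV J Xm j)) in *.
    rewrite (functional_extensionality_dep _ (fun j => fun rho => / dt * Aint j rho)) in Hc.
    2:{ intro j. apply functional_extensionality. intro rho. unfold Aint.
        unfold evV, ev, vdot, vscal, vsub, comp1, comp2, vadd; simpl. unfold Rdiv. ring. }
    rewrite ipS_scal in Hc by (auto; unfold Aint; ctac).
    set (Kint := fun j rho => fst (evV J Xm j rho) *
         vdot (evV J kappa j rho) (evV J kappa j rho) * vnorm (derV J Xm j)) in *.
    assert (EA : ip_sharp v J Aint = dt * ip_sharp v J Kint).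
    { rewrite <- Hc. field. auto. }
    pose proof (core per J bc rhat Xm dX (ip_sharp v J Aint) HJ0 HA HdX He) as C.
    rewrite EA in C. lra.
Qed.
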